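(* Let $G$ be a finitely generated group and $\mathcal H$ a collection of subgroups forming a tight algebraic network inside $G$, and let $G_1$ be the finite-index subgroup of $G$ generated by the subgroups in $\mathcal H$. Then (with respect to a word metric) $G$ is a $(\tau,\eta)$-tight network, for some $\tau,\eta\ge0$, with respect to the collection of left cosets $\mathcal L=\{gH: g\in G_1,\ H\in\mathcal H\}$.
   Context: $G$ carries a word metric for a finite generating set. $\mathcal N_R(A)$ is the open $R$-neighborhood, $B(x,R)$ the open ball. A $(\lambda,\kappa)$-quasi-geodesic is a map $q$ from a connected subset of $\mathbb R$ with $\frac1\lambda|s-t|-\kappa\le\mathrm{dist}(q(s),q(t))\le\lambda|s-t|+\kappa$. A subset $A$ is $(C,L)$-quasi-convex if any two of its points are joined by an $(L,L)$-quasi-geodesic in $\mathcal N_C(A)$, and $M$-quasi-convex means $(M,M)$-quasi-convex; $A$ is $C$-path connected if any two of its points are joined by a path in $\mathcal N_C(A)$. Tight algebraic network: $G$ is an $M$-tight algebraic network with respect to $\mathcal H$ (and $\mathcal H$ forms a tight algebraic network inside $G$ if this holds for some $M$) if $\mathcal H$ is a collection of $M$-quasi-convex subgroups whose union generates a finite-index subgroup of $G$, and for any $H,H'\in\mathcal H$ there is a finite sequence $H=H_1,\dots,H_k=H'$ in $\mathcal H$ with each $H_i\cap H_{i+1}$ infinite and $M$-path connected. Tight network: a metric space $X$ is a $(\tau,\eta)$-tight network with respect to $\mathcal L$ if each $L\in\mathcal L$ is $(\tau,\eta)$-quasi-convex, $X=\bigcup_{L\in\mathcal L}\mathcal N_\tau(L)$,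 and for any $L,L'\in\mathcal L$ and any $x$ with $B(x,3\tau)$ meeting both $L$ and $L'$ there is a sequence $L=L_1,\dots,L_k=L'$ in $\mathcal L$, $k\le\eta$, with each $\mathcal N_\tau(L_i)\cap\mathcal N_\tau(L_{i+1})$ of infinite diameter, $\eta$-path connected and meeting $B(x,\eta)$. *)

(* Defs.v *)
From Stdlib Require Import Reals Lra List ClassicalEpsilon.
Open Scope R_scope.

Record Group := {
  carrier :> Type;
  gmul : carrier -> carrier -> carrier;
  ginv : carrier -> carrier;
  gone : carrier;
  gmulA : forall x y z, gmul x (gmul y z) = gmul (gmul x y) z;
  gmul1l : forall x, gmul gone x = x;
  gmul1r : forall x, gmul x gone = x;
  gmulVl : forall x, gmul (ginv x) x = gone;
  gmulVr : forall x, gmul x (ginv x) = gone }.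

Arguments gmul {_}.
Arguments ginv {_}.
Arguments gone {_}.

Section Defs.
Variable G : Group.

Definition wprod (w : list G) : G := fold_right gmul gone w.

Definition word_over (U : G -> Prop) (w : list G) : Prop :=
  Forall (fun s => U s \/ U (ginv s)) w.

Definition gen (U : G -> Prop) (g : G) : Prop :=
  exists w, word_over U w /\ wprod w = g.

Definition is_subgroup (H : G -> Prop) : Prop :=
  H gone /\ (forall x y, H x -> H y -> H (gmul x y)) /\ (forall x, H x -> H (ginv x)).

Definition generates (Sg : list G) : Prop := forall g, gen (fun s => In s Sg) g.

Definition has_len (Sg : list G) (g : G) (n : nat) : Prop :=
  exists w, word_over (fun s => In s Sg) w /\ length w = n /\ wprod w = g.

(** Word length: the least such n (meaningful when S generates G). *)
Definition word_len (Sg : list G) (g : G) : nat :=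
  epsilon (inhabits 0%nat)
    (fun n => has_len Sg g n /\ forall m, has_len Sg g m -> (n <= m)%nat).

Definition dist (Sg : list G) (x y : G) : R := INR (word_len Sg (gmul (ginv x) y)).

Definition nbhd (Sg : list G) (r : R) (A : G -> Prop) (x : G) : Prop :=
  exists a, A a /\ dist Sg x a < r.
Definition ball (Sg : list G) (x : G) (r : R) (y : G) : Prop := dist Sg x y < r.

Definition quasi_geodesic (Sg : list G) (lam kap : R) (a b : R) (q : R -> G) : Prop :=
  a <= b /\
  forall s t, a <= s <= b -> a <= t <= b ->
    / lam * Rabs (s - t) - kap <= dist Sg (q s) (q t) <= lam * Rabs (s - t) + kap.

Definition quasi_convex (Sg : list G) (C L : R) (A : G -> Prop) : Prop :=
  forall x y, A x -> A y ->
    exists a b q, quasi_geodesic Sg L L a b q /\ q a = x /\ q b = y /\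
      forall t, a <= t <= b -> nbhd Sg C A (q t).

(** A path (in the Cayley graph) from x to y inside B: vertices p 0 .. p n,
    consecutive ones at distance at most 1. *)
Definition path_in (Sg : list G) (B : G -> Prop) (x y : G) : Prop :=
  exists (n : nat) (p : nat -> G), p 0%nat = x /\ p n = y /\
    (forall i, (i < n)%nat -> dist Sg (p i) (p (S i)) <= 1) /\
    (forall i, (i <= n)%nat -> B (p i)).

Definition path_connected (Sg : list G) (C : R) (A : G -> Prop) : Prop :=
  forall x y, A x -> A y -> path_in Sg (nbhd Sg C A) x y.

Definition finite_set (A : G -> Prop) : Prop :=
  exists l : list G, forall x, A x -> In x l.

Definition infinite_diam (Sg : list G) (A : G -> Prop) : Prop :=
  forall r : R, exists x y, A x /\ A y /\ r < dist Sg x y.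

Definition inter (A B : G -> Prop) (x : G) : Prop := A x /\ B x.

Definition finite_index (K : G -> Prop) : Prop :=
  exists T : list G, forall g, exists t k, In t T /\ K k /\ g = gmul t k.

Definition gen_union (Hs : (G -> Prop) -> Prop) : G -> Prop :=
  gen (fun x => exists H, Hs H /\ H x).

Definition tight_alg_network (Sg : list G) (M : R) (Hs : (G -> Prop) -> Prop) : Prop :=
  (forall H, Hs H -> is_subgroup H /\ quasi_convex Sg M M H) /\
  finite_index (gen_union Hs) /\
  (forall H H', Hs H -> Hs H' ->
     exists (k : nat) (Hi : nat -> (G -> Prop)),
       (1 <= k)%nat /\ Hi 0%nat = H /\ Hi (k - 1)%nat = H' /\
       (forall i, (i < k)%nat -> Hs (Hi i)) /\
       (forall i, (i + 1 < k)%nat ->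
          ~ finite_set (inter (Hi i) (Hi (S i))) /\
          path_connected Sg M (inter (Hi i) (Hi (S i))))).

Definition tight_network (Sg : list G) (tau eta : R) (Ls : (G -> Prop) -> Prop) : Prop :=
  (forall L, Ls L -> quasi_convex Sg tau eta L) /\
  (forall x : G, exists L, Ls L /\ nbhd Sg tau L x) /\
  (forall L L' x, Ls L -> Ls L' ->
     (exists y, ball Sg x (3 * tau) y /\ L y) ->
     (exists y, ball Sg x (3 * tau) y /\ L' y) ->
     exists (k : nat) (Li : nat -> (G -> Prop)),
       (1 <= k)%nat /\ INR k <= eta /\ Li 0%nat = L /\ Li (k - 1)%nat = L' /\
       (forall i, (i < k)%nat -> Ls (Li i)) /\
       (forall i, (i + 1 < k)%nat ->
          let I := inter (nbhd Sg tau (Li i)) (nbhd Sg tau (Li (S i))) in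
          infinite_diam Sg I /\ path_connected Sg eta I /\
          exists y, I y /\ ball Sg x eta y)).

Definition coset (g : G) (H : G -> Prop) (y : G) : Prop :=
  exists h, H h /\ y = gmul g h.

Definition coset_family (G1 : G -> Prop) (Hs : (G -> Prop) -> Prop)
  (L : G -> Prop) : Prop :=
  exists g H, G1 g /\ Hs H /\ L = coset g H.

End Defs.

(* Main.v *)
Require Import Defs.
From Stdlib Require Import Reals Lra Lia List ClassicalEpsilon Classical FunctionalExtensionality PropExtensionality.
Open Scope R_scope.

Section Grp.
Variable G : Group.

Lemma mulKV (x y : G) : gmul (ginv x) (gmul x y) = y.
Proof. rewrite gmulA, gmulVl, gmul1l; reflexivity. Qed.
Lemma mulVK (x y : G) : gmul x (gmul (ginv x) y) = y.
Proof. rewrite gmulA, gmulVr, gmul1l; reflexivity. Qed.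
Lemma mulKr (x y : G) : gmul (gmul x y) (ginv y) = x.
Proof. rewrite <- gmulA, gmulVr, gmul1r; reflexivity. Qed.
Lemma mulVr (x y : G) : gmul (gmul x (ginv y)) y = x.
Proof. rewrite <- gmulA, gmulVl, gmul1r; reflexivity. Qed.
Lemma inv_uniq (x y : G) : gmul x y = gone -> y = ginv x.
Proof. intro H. rewrite <- (mulKV x y), H, gmul1r. reflexivity. Qed.
Lemma ginvK (x : G) : ginv (ginv x) = x.
Proof. symmetry. apply inv_uniq. apply gmulVl. Qed.
Lemma ginvM (x y : G) : ginv (gmul x y) = gmul (ginv y) (ginv x).
Proof. symmetry. apply inv_uniq. rewrite gmulA, <- (gmulA _ x y), gmulVr, gmul1r, gmulVr. reflexivity. Qed.
Lemma ginv1 : ginv (@gone G) = gone.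
Proof. symmetry. apply inv_uniq. apply gmul1l. Qed.

Lemma wprod_app (l1 l2 : list G) : wprod G (l1 ++ l2) = gmul (wprod G l1) (wprod G l2).
Proof. induction l1; simpl. rewrite gmul1l; auto. rewrite IHl1, gmulA; auto. Qed.

Lemma gen_sub (U : G -> Prop) : is_subgroup G (gen G U).
Proof.
  split; [|split].
  - exists nil; split; [constructor|reflexivity].
  - intros x y [w1 [h1 e1]] [w2 [h2 e2]]. exists (w1 ++ w2). split.
    + apply Forall_app; auto.
    + rewrite wprod_app; subst; auto.
  - intros x [w [h e]]. subst x. exists (rev (map ginv w)). split.
    + unfold word_over in *. apply Forall_rev. apply Forall_map.
      eapply Forall_impl; [|exact h]. intros s [u|u]; [right; rewrite ginvK|left]; auto.
    + induction w; simpl. rewrite ginv1; auto.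
      inversion h; subst. rewrite wprod_app, IHw by auto. simpl. rewrite gmul1r, ginvM. auto.
Qed.

Lemma gen_incl (U : G -> Prop) x : U x -> gen G U x.
Proof. intro. exists (x :: nil). split. constructor; [left; exact H|constructor]. simpl. apply gmul1r. Qed.

Lemma sub_gen (U H : G -> Prop) : is_subgroup G H -> (forall x, U x -> H x) ->
  forall x, gen G U x -> H x.
Proof.
  intros [h1 [h2 h3]] hU x [w [hw e]]. subst x. induction w; simpl; auto.
  inversion hw; subst. apply h2; auto. destruct H2 as [u|u]; auto.
  rewrite <- ginvK. apply h3; auto.
Qed.

Lemma least_nat (P : nat -> Prop) : (exists n, P n) -> exists n, P n /\ forall m, P m -> (n <= m)%nat.
Proof.
  intros [n hn]. apply NNPP. intro hc.
  assert (forall k m, (m <= k)%nat -> ~ P m).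
  { induction k; intros m hm hp.
    - apply hc. exists m. split; auto. intros. lia.
    - apply hc. exists m. split; auto. intros m' hm'. destruct (Compare_dec.le_lt_dec m m'); auto.
      exfalso. apply (IHk m'); auto. lia. }
  apply (H n n); auto.
Qed.

Lemma bound_list {A : Type} (P : A -> nat -> Prop) (l : list A) :
  (forall a, In a l -> exists n, P a n) -> exists N, forall a, In a l -> exists n, (n <= N)%nat /\ P a n.
Proof.
  induction l; intros h. exists 0%nat. intros a [].
  destruct (h a (or_introl eq_refl)) as [n hn].
  destruct IHl as [N hN]. intros b hb. apply h; right; auto.
  exists (max n N). intros b [e|hb]. subst. exists n; split; auto; lia.
  destruct (hN b hb) as [m [h1 h2]]. exists m; split; auto; lia.
Qed.

Variable Sg : list G.
Hypothesis hgen : generates G Sg.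

Lemma has_len_ex g : exists n, has_len G Sg g n.
Proof. destruct (hgen g) as [w [h e]]. exists (length w), w; auto. Qed.

Lemma wl_spec g : has_len G Sg g (word_len G Sg g) /\ forall m, has_len G Sg g m -> (word_len G Sg g <= m)%nat.
Proof. unfold word_len. apply epsilon_spec. apply least_nat, has_len_ex. Qed.

Lemma wl_le g m : has_len G Sg g m -> (word_len G Sg g <= m)%nat.
Proof. apply wl_spec. Qed.

Lemma wl_mul x y : (word_len G Sg (gmul x y) <= word_len G Sg x + word_len G Sg y)%nat.
Proof.
  destruct (wl_spec x) as [[w1 [a1 [b1 c1]]] _]. destruct (wl_spec y) as [[w2 [a2 [b2 c2]]] _].
  apply wl_le. exists (w1 ++ w2). split; [apply Forall_app; auto|]. split.
  rewrite length_app; lia. rewrite wprod_app; subst; auto.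
Qed.

Lemma wl_inv_le x : (word_len G Sg (ginv x) <= word_len G Sg x)%nat.
Proof.
  destruct (wl_spec x) as [[w [a [b c]]] _]. apply wl_le. exists (rev (map ginv w)).
  split; [|split].
  - unfold word_over in *. apply Forall_rev. apply Forall_map.
    eapply Forall_impl; [|exact a]. intros s [u|u]; [right; rewrite ginvK|left]; auto.
  - rewrite length_rev, length_map; auto.
  - subst. clear b. induction w; simpl. rewrite ginv1; auto.
    inversion a; subst. rewrite wprod_app, IHw by auto. simpl. rewrite gmul1r, ginvM. auto.
Qed.

Lemma wl_inv x : word_len G Sg (ginv x) = word_len G Sg x.
Proof. apply Nat.le_antisymm. apply wl_inv_le. assert (h := wl_inv_le (ginv x)); rewrite ginvK in h; exact h. Qed.

Lemma wl_one : word_len G Sg gone = 0%nat.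
Proof. assert (h := wl_le gone 0). assert (has_len G Sg gone 0). exists nil; simpl; repeat split; constructor. specialize (h H). lia. Qed.

Lemma wl_letter s : In s Sg \/ In (ginv s) Sg -> (word_len G Sg s <= 1)%nat.
Proof. intro. apply wl_le. exists (s :: nil). split; [constructor; [exact H|constructor]|]. split; [reflexivity|]. simpl. rewrite gmul1r; auto. Qed.

Lemma dist_ge0 x y : 0 <= Defs.dist G Sg x y.
Proof. apply pos_INR. Qed.
Lemma dist_refl x : Defs.dist G Sg x x = 0.
Proof. unfold Defs.dist. rewrite gmulVl, wl_one. auto. Qed.
Lemma dist_sym x y : Defs.dist G Sg x y = Defs.dist G Sg y x.
Proof. unfold Defs.dist. rewrite <- wl_inv, ginvM, ginvK. auto. Qed.
Lemma dist_tri x y z : Defs.dist G Sg x z <= Defs.dist G Sg x y + Defs.dist G Sg y z.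
Proof.
  unfold Defs.dist. rewrite <- plus_INR. apply le_INR.
  replace (gmul (ginv x) z) with (gmul (gmul (ginv x) y) (gmul (ginv y) z)).
  apply wl_mul. rewrite <- gmulA, mulVK. auto.
Qed.
Lemma dist_left p x y : Defs.dist G Sg (gmul p x) (gmul p y) = Defs.dist G Sg x y.
Proof. unfold Defs.dist. rewrite ginvM, <- gmulA, mulKV. auto. Qed.
Lemma dist_mulr p s : Defs.dist G Sg p (gmul p s) = INR (word_len G Sg s).
Proof. unfold Defs.dist. rewrite mulKV. auto. Qed.


Definition alph : list G := Sg ++ map ginv Sg.
Fixpoint words (k : nat) : list (list G) :=
  match k with
  | O => nil :: nil
  | Datatypes.S k => flat_map (fun a => map (cons a) (words k)) alph
  end.

Lemma in_words w : word_over G (fun s => In s Sg) w -> In w (words (length w)).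
Proof.
  induction w; intro h; simpl. auto.
  inversion h; subst. apply in_flat_map. exists a. split.
  - unfold alph. apply in_or_app. destruct H1 as [u|u]; [left; auto|right].
    rewrite <- (ginvK a). apply in_map; auto.
  - apply in_map. auto.
Qed.

Definition ballL (n : nat) : list G := flat_map (fun k => map (wprod G) (words k)) (seq 0 (Datatypes.S n)).

Lemma in_ballL g n : (word_len G Sg g <= n)%nat -> In g (ballL n).
Proof.
  intro hl. destruct (wl_spec g) as [[w [a [b c]]] _].
  apply in_flat_map. exists (word_len G Sg g). split. apply in_seq. lia.
  rewrite <- b, <- c. apply in_map, in_words; auto.
Qed.

Inductive pth (B : G -> Prop) : G -> G -> Prop :=
| pth_refl x : B x -> pth B x x
| pth_step x z y : B x -> Defs.dist G Sg x z <= 1 -> pth B z y -> pth B x y.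

Lemma pth_path B x y : pth B x y -> path_in G Sg B x y.
Proof.
  induction 1.
  - exists 0%nat, (fun _ => x). split; [auto|split; [auto|split]]. intros; lia. intros; auto.
  - destruct IHpth as [n [p [h0 [hn [hs hb]]]]].
    exists (Datatypes.S n), (fun i => match i with O => x | Datatypes.S j => p j end).
    repeat split; auto.
    + intros [|i] hi. rewrite h0; auto. apply hs; lia.
    + intros [|i] hi. auto. apply hb; lia.
Qed.

Lemma path_pth B x y : path_in G Sg B x y -> pth B x y.
Proof.
  intros [n [p [h0 [hn [hs hb]]]]]. subst x y. revert p hs hb.
  induction n; intros p hs hb. apply pth_refl, hb; lia.
  apply pth_step with (p 1%nat). apply hb; lia. apply hs; lia.
  apply (IHn (fun i => p (Datatypes.S i))); intros; [apply hs|apply hb]; lia.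
Qed.

Lemma pth_mono (B B' : G -> Prop) x y : (forall z, B z -> B' z) -> pth B x y -> pth B' x y.
Proof. intros h. induction 1. apply pth_refl; auto. apply pth_step with z; auto. Qed.

Lemma pth_end B x y : pth B x y -> B y.
Proof. induction 1; auto. Qed.

Lemma pth_trans B x y z : pth B x y -> pth B y z -> pth B x z.
Proof. induction 1; intros; auto. apply pth_step with z0; auto. Qed.

Lemma pth_sym B x y : pth B x y -> pth B y x.
Proof.
  induction 1 as [x hx | x z y hx hd hp IH]. apply pth_refl; auto.
  apply pth_trans with z; [exact IH|]. apply pth_step with x.
  destruct hp; auto. rewrite dist_sym; exact hd. apply pth_refl; exact hx.
Qed.

Lemma pth_left B p x y : pth B x y -> pth (fun z => B (gmul (ginv p) z)) (gmul p x) (gmul p y).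
Proof.
  induction 1. apply pth_refl; rewrite mulKV; auto.
  apply pth_step with (gmul p z); auto. rewrite mulKV; auto. rewrite dist_left; auto.
Qed.

Lemma geo_word w x : word_over G (fun s => In s Sg) w ->
  pth (fun v => Defs.dist G Sg x v <= INR (length w)) x (gmul x (wprod G w)).
Proof.
  revert x; induction w; intros x h.
  - simpl. rewrite gmul1r. apply pth_refl. rewrite dist_refl; lra.
  - change (length (a::w)) with (Datatypes.S (length w)).
    change (wprod G (a::w)) with (gmul a (wprod G w)).
    inversion h; subst. apply pth_step with (gmul x a).
    + rewrite dist_refl. apply pos_INR.
    + rewrite dist_mulr. change 1 with (INR 1). apply le_INR, wl_letter; auto.
    + rewrite gmulA. eapply pth_mono; [|apply IHw; auto].
      intros z hz. rewrite S_INR. eapply Rle_trans; [apply (dist_tri _ (gmul x a))|].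
      rewrite dist_mulr. assert (INR (word_len G Sg a) <= 1).
      change 1 with (INR 1). apply le_INR, wl_letter; auto. lra.
Qed.

Lemma geo x y : pth (fun v => Defs.dist G Sg x v <= Defs.dist G Sg x y) x y.
Proof.
  destruct (wl_spec (gmul (ginv x) y)) as [[w [a [b c]]] _].
  assert (e : y = gmul x (wprod G w)) by (rewrite c, mulVK; auto).
  assert (e2 : Defs.dist G Sg x y = INR (length w)) by (unfold Defs.dist; rewrite b; auto).
  rewrite e2. rewrite e. apply geo_word; auto.
Qed.

Lemma nbhd_coset r A p z : nbhd G Sg r (coset G p A) z <-> nbhd G Sg r A (gmul (ginv p) z).
Proof.
  split.
  - intros [a [[h [hA e]] hd]]. subst a. exists h. split; auto.
    rewrite <- (dist_left p), mulVK; auto.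
  - intros [a [hA hd]]. exists (gmul p a). split. exists a; auto.
    rewrite <- (dist_left (ginv p)), mulKV; auto.
Qed.

Lemma infinite_diam_of (X : G -> Prop) : (exists x, X x) -> ~ finite_set G X -> infinite_diam G Sg X.
Proof.
  intros [x hx] hf r. destruct (INR_unbounded r) as [n hn].
  destruct (classic (exists y, X y /\ ~ In (gmul (ginv x) y) (ballL n))) as [[y [hy hn2]]|hc].
  - exists x, y. repeat split; auto. unfold Defs.dist.
    assert (~ (word_len G Sg (gmul (ginv x) y) <= n)%nat). intro; apply hn2, in_ballL; auto.
    assert (INR n < INR (word_len G Sg (gmul (ginv x) y))). apply lt_INR; lia. lra.
  - exfalso. apply hf. exists (map (gmul x) (ballL n)). intros y hy.
    rewrite <- (mulVK x y). apply in_map. apply NNPP. intro. apply hc. eauto.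
Qed.

Lemma coset_eq (H : G -> Prop) g h : is_subgroup G H -> H h -> coset G g H = coset G (gmul g h) H.
Proof.
  intros [h1 [h2 h3]] hh. apply functional_extensionality. intro y. apply propositional_extensionality.
  split.
  - intros [k [hk e]]. exists (gmul (ginv h) k). split; auto. subst. rewrite <- gmulA, mulVK; auto.
  - intros [k [hk e]]. exists (gmul h k). split; auto. subst. rewrite gmulA; auto.
Qed.


Lemma inter_lemma (A B : G -> Prop) (r : nat) : is_subgroup G A -> is_subgroup G B ->
  exists n : nat, forall z, nbhd G Sg (INR r) A z -> nbhd G Sg (INR r) B z ->
    nbhd G Sg (INR n) (inter G A B) z.
Proof.
  intros [a1 [a2 a3]] [b1 [b2 b3]].
  destruct (bound_list (fun w n => (exists a b, A a /\ B b /\ gmul (ginv a) b = w) ->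
     exists a b, A a /\ B b /\ gmul (ginv a) b = w /\ (word_len G Sg a <= n)%nat) (ballL (r + r)))
    as [N hN].
  { intros w _. destruct (classic (exists a b, A a /\ B b /\ gmul (ginv a) b = w)) as [[a [b [ha [hb e]]]]|hc].
    - exists (word_len G Sg a). intros _. exists a, b; auto.
    - exists 0%nat. intro; contradiction. }
  exists (r + N)%nat. intros z [a [ha hda]] [b [hb hdb]].
  unfold Defs.dist in hda, hdb. apply INR_lt in hda. apply INR_lt in hdb.
  set (u := gmul (ginv z) a) in *. set (v := gmul (ginv z) b) in *.
  assert (ew : gmul (ginv a) b = gmul (ginv u) v).
  { unfold u, v. rewrite ginvM, ginvK, <- gmulA, mulVK. auto. }
  assert (hin : In (gmul (ginv a) b) (ballL (r + r))).
  { apply in_ballL. rewrite ew. eapply Nat.le_trans; [apply wl_mul|]. rewrite wl_inv. lia. }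
  destruct (hN _ hin) as [n [hn hP]]. destruct hP as [a' [b' [ha' [hb' [e' hl]]]]]. eauto.
  exists (gmul a (ginv a')). split. split.
  - apply a2; auto.
  - replace (gmul a (ginv a')) with (gmul b (ginv b')). apply b2; auto.
    rewrite <- (mulVK a b), <- e'. rewrite <- !gmulA, gmulVr, gmul1r. auto.
  - unfold Defs.dist. replace (gmul (ginv z) (gmul a (ginv a'))) with (gmul u (ginv a')).
    apply lt_INR. eapply Nat.le_lt_trans; [apply wl_mul|]. rewrite wl_inv. lia.
    unfold u. rewrite gmulA. auto.
Qed.

Lemma pred_list (l : list G) : exists PL : list (G -> Prop), forall P : G -> Prop,
  exists Q, In Q PL /\ forall z, In z l -> (P z <-> Q z).
Proof.
  induction l as [|a l IH].
  - exists ((fun _ => False) :: nil). intro P. exists (fun _ => False). split. left; auto. intros z [].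
  - destruct IH as [PL hPL].
    exists (map (fun Q => fun z => z = a \/ Q z) PL ++ map (fun Q => fun z => z <> a /\ Q z) PL).
    intro P. destruct (hPL P) as [Q [hQ hz]]. destruct (classic (P a)) as [pa|npa].
    + exists (fun z => z = a \/ Q z). split. apply in_or_app; left. apply (in_map (fun Q => fun z => z = a \/ Q z)); auto.
      intros z hzl. destruct (classic (z = a)) as [e|ne]. subst; tauto.
      destruct hzl as [e|hzl]. congruence. specialize (hz z hzl). tauto.
    + exists (fun z => z <> a /\ Q z). split. apply in_or_app; right. apply (in_map (fun Q => fun z => z <> a /\ Q z)); auto.
      intros z hzl. destruct (classic (z = a)) as [e|ne]. subst; tauto.
      destruct hzl as [e|hzl]. congruence. specialize (hz z hzl). tauto.
Qed.

Lemma qc_pos M H : is_subgroup G H -> quasi_convex G Sg M M H -> 0 < M.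
Proof.
  intros [h1 _] hq. destruct (hq gone gone h1 h1) as [a [b [q [[hab _] [ea [eb hn]]]]]].
  destruct (hn a) as [z [_ hd]]. lra. pose proof (dist_ge0 (q a) z). lra.
Qed.

Lemma qc_gen M H (n0 : nat) : is_subgroup G H -> quasi_convex G Sg M M H -> 4 * M <= INR n0 ->
  forall y, H y -> gen G (fun z => H z /\ In z (ballL n0)) y.
Proof.
  intros hsub hq h4 y hy. assert (hM := qc_pos M H hsub hq).
  destruct hsub as [h1 [h2 h3]].
  assert (hgs := gen_sub (fun z => H z /\ In z (ballL n0))). destruct hgs as [g1 [g2 g3]].
  assert (hstep : forall h h', H h -> H h' -> gen G (fun z => H z /\ In z (ballL n0)) h ->
     Defs.dist G Sg h h' < 4 * M -> gen G (fun z => H z /\ In z (ballL n0)) h').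
  { intros h h' hh hh' hg hd. rewrite <- (mulVK h h'). apply g2; auto. apply gen_incl. split.
    apply h2; auto. apply in_ballL. unfold Defs.dist in hd. apply INR_le. lra. }
  destruct (hq gone y h1 hy) as [a [b [q [[hab hqg] [ea [eb hn]]]]]].
  destruct (INR_unbounded (b - a)) as [N0 hN0]. set (N := Datatypes.S N0).
  assert (hNpos : 0 < INR N) by (apply lt_0_INR; unfold N; lia).
  assert (hN : b - a <= INR N) by (unfold N; rewrite S_INR; lra).
  set (d := (b - a) / INR N).
  assert (hd0 : 0 <= d).
  { unfold d, Rdiv. apply Rmult_le_pos. lra. left; apply Rinv_0_lt_compat; lra. }
  assert (hd1 : d <= 1).
  { unfold d. apply (Rmult_le_reg_r (INR N)); auto. unfold Rdiv. rewrite Rmult_assoc, Rinv_l; lra. }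
  assert (hNd : INR N * d = b - a) by (unfold d; field; lra).
  set (t := fun i : nat => a + INR i * d).
  assert (ht : forall i, (i <= N)%nat -> a <= t i <= b).
  { intros i hi. apply le_INR in hi. pose proof (pos_INR i). unfold t. split. nra. nra. }
  assert (claim : forall i, (i <= N)%nat -> exists h, H h /\ Defs.dist G Sg (q (t i)) h < M /\
            gen G (fun z => H z /\ In z (ballL n0)) h).
  { induction i; intro hi.
    - exists gone. split; auto. split; auto. unfold t. simpl. rewrite Rmult_0_l, Rplus_0_r, ea, dist_refl; auto.
    - destruct IHi as [h [hh [hdh hgh]]]. lia.
      destruct (hn (t (Datatypes.S i))) as [h' [hh' hdh']]. apply ht; auto.
      exists h'. split; auto. split; auto. apply (hstep h); auto.
      assert (hq1 := hqg (t i) (t (Datatypes.S i)) (ht i ltac:(lia)) (ht _ hi)).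
      assert (et : Rabs (t i - t (Datatypes.S i)) = d).
      { unfold t. rewrite S_INR. replace (a + INR i * d - (a + (INR i + 1) * d)) with (- d) by ring.
        rewrite Rabs_Ropp, Rabs_right; lra. }
      rewrite et in hq1.
      assert (M * d <= M) by nra.
      pose proof (dist_tri h (q (t i)) h'). pose proof (dist_tri (q (t i)) (q (t (Datatypes.S i))) h').
      rewrite dist_sym in hdh. lra. }
  destruct (claim N (Nat.le_refl _)) as [h [hh [hdh hgh]]].
  assert (etN : t N = b) by (unfold t; lra). rewrite etN, eb in hdh.
  apply (hstep h); auto. rewrite dist_sym; lra.
Qed.

Lemma finite_Hs M (Hs : (G -> Prop) -> Prop) :
  (forall H, Hs H -> is_subgroup G H /\ quasi_convex G Sg M M H) ->
  exists HL : list (G -> Prop), forall H, Hs H -> In H HL.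
Proof.
  intros hH. destruct (INR_unbounded (4 * M)) as [n0 hn0].
  destruct (pred_list (ballL n0)) as [PL hPL].
  exists (map (fun Q => gen G (fun z => Q z /\ In z (ballL n0))) PL).
  intros H hs. destruct (hH H hs) as [hsub hq]. destruct (hPL H) as [Q [hQ hz]].
  replace H with (gen G (fun z => Q z /\ In z (ballL n0))). apply (in_map (fun Q => gen G (fun z => Q z /\ In z (ballL n0)))); auto.
  apply functional_extensionality. intro y. apply propositional_extensionality. split.
  - apply sub_gen; auto. intros z [h1 h2]. apply hz; auto.
  - intro hy. assert (hg := qc_gen M H n0 hsub hq ltac:(lra) y hy).
    destruct hg as [w [hw e]]. exists w; split; auto.
    unfold word_over in *. eapply Forall_impl; [|exact hw].
    intros s [[u1 u2]|[u1 u2]]; [left|right]; split; auto; apply hz; auto.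
Qed.


Definition PIc (tau eta : R) (x : G) (A B : G -> Prop) : Prop :=
  let I := inter G (nbhd G Sg tau A) (nbhd G Sg tau B) in
  infinite_diam G Sg I /\ path_connected G Sg eta I /\ exists y, I y /\ ball G Sg x eta y.

Lemma PI_coset (tau eta M Rr : R) x p A B : is_subgroup G A -> is_subgroup G B ->
  ~ finite_set G (inter G A B) -> path_connected G Sg M (inter G A B) ->
  (forall z, nbhd G Sg tau A z -> nbhd G Sg tau B z -> nbhd G Sg Rr (inter G A B) z) ->
  0 < tau -> M <= eta -> Rr <= eta -> Defs.dist G Sg x p < eta ->
  PIc tau eta x (coset G p A) (coset G p B).
Proof.
  intros hA hB hinf hpc hR htau hMe hRe hxp.
  set (I := inter G (nbhd G Sg tau (coset G p A)) (nbhd G Sg tau (coset G p B))).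
  assert (hsubI : forall c, inter G A B c -> I (gmul p c)).
  { intros c [ca cb]. split; apply nbhd_coset; rewrite mulKV; exists c; split; auto; rewrite dist_refl; auto. }
  unfold PIc. fold I. split; [|split].
  - assert (hY : infinite_diam G Sg (fun z => inter G A B (gmul (ginv p) z))).
    { apply infinite_diam_of.
      + exists p. rewrite gmulVl. destruct hA as [a1 _]; destruct hB as [b1 _]. split; auto.
      + intros [l hl]. apply hinf. exists (map (gmul (ginv p)) l). intros c hc.
        rewrite <- (mulKV p c). apply in_map. apply hl. rewrite mulKV. auto. }
    intro r. destruct (hY r) as [z [w [hz [hw hd]]]]. exists z, w. split; [|split]; auto.
    + rewrite <- (mulVK p z). apply hsubI; auto.
    + rewrite <- (mulVK p w). apply hsubI; auto.
  - intros z w hz hw. apply pth_path.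
    assert (near : forall v, I v -> exists c, inter G A B c /\ Defs.dist G Sg v (gmul p c) < Rr).
    { intros v [h1 h2]. apply nbhd_coset in h1. apply nbhd_coset in h2.
      destruct (hR _ h1 h2) as [c [hc hd]]. exists c. split; auto.
      rewrite <- (dist_left (ginv p)), mulKV; auto. }
    destruct (near z hz) as [c [hc hdc]]. destruct (near w hw) as [d [hd hdd]].
    assert (hgeo : forall v u, I v -> Defs.dist G Sg v u < Rr -> pth (nbhd G Sg eta I) v u).
    { intros v u hv hvu. eapply pth_mono; [|apply (geo v u)].
      intros y hy. exists v. split; auto. rewrite dist_sym. lra. }
    apply pth_trans with (gmul p c); [apply hgeo; auto|].
    apply pth_trans with (gmul p d); [|apply pth_sym; apply hgeo; auto; rewrite dist_sym; auto].
    assert (h1 := pth_left _ p _ _ (path_pth _ _ _ (hpc c d hc hd))).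
    eapply pth_mono; [|exact h1]. intros v [e [he hde]]. exists (gmul p e). split.
    apply hsubI; auto. rewrite <- (dist_left (ginv p)), mulKV. lra.
  - exists (gmul p gone). split. apply hsubI. destruct hA as [a1 _]; destruct hB as [b1 _]. split; auto.
    unfold ball. rewrite gmul1r; auto.
Qed.

Definition Chn (Ls : (G -> Prop) -> Prop) (P : (G -> Prop) -> (G -> Prop) -> Prop) L L' (k : nat) : Prop :=
  exists Li : nat -> (G -> Prop), (1 <= k)%nat /\ Li 0%nat = L /\ Li (k - 1)%nat = L' /\
    (forall i, (i < k)%nat -> Ls (Li i)) /\
    (forall i, (i + 1 < k)%nat -> P (Li i) (Li (Datatypes.S i))).

Lemma Chn_cat Ls P L L1 L' k1 k2 : Chn Ls P L L1 k1 -> Chn Ls P L1 L' k2 -> Chn Ls P L L' (k1 + k2 - 1).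
Proof.
  intros [L1i [a1 [b1 [c1 [d1 e1]]]]] [L2i [a2 [b2 [c2 [d2 e2]]]]].
  exists (fun i => if Compare_dec.lt_dec i k1 then L1i i else L2i (i - (k1 - 1))%nat).
  split; [lia|split; [|split; [|split]]].
  - destruct (Compare_dec.lt_dec 0 k1); [auto|lia].
  - destruct (Compare_dec.lt_dec (k1 + k2 - 1 - 1) k1).
    + assert (k2 = 1%nat) by lia. subst. replace (k1 + 1 - 1 - 1)%nat with (k1 - 1)%nat by lia.
      simpl. rewrite b2. auto.
    + rewrite <- c2. f_equal. lia.
  - intros i hi. destruct (Compare_dec.lt_dec i k1). apply d1; auto. apply d2; lia.
  - intros i hi. destruct (Compare_dec.lt_dec i k1); destruct (Compare_dec.lt_dec (Datatypes.S i) k1).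
    + apply e1; lia.
    + assert (i = k1 - 1)%nat by lia. subst i. rewrite c1, <- b2.
      replace (Datatypes.S (k1 - 1) - (k1 - 1))%nat with 1%nat by lia. apply e2; lia.
    + lia.
    + replace (Datatypes.S i - (k1 - 1))%nat with (Datatypes.S (i - (k1 - 1))) by lia. apply e2; lia.
Qed.

Fixpoint cost (w : list G) : nat :=
  match w with nil => 0%nat | s :: w' => (word_len G Sg s + cost w')%nat end.

Lemma walk (Ls : (G -> Prop) -> Prop) (Hs : (G -> Prop) -> Prop) (G1 : G -> Prop)
  (P : (G -> Prop) -> (G -> Prop) -> Prop) (Nc : nat) (x : G) (E : R) :
  is_subgroup G G1 ->
  (forall K, Hs K -> is_subgroup G K /\ forall z, K z -> G1 z) ->
  (forall p H K, G1 p -> Hs H -> Hs K -> Defs.dist G Sg x p < E ->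
     exists k, (k <= Nc)%nat /\ Chn Ls P (coset G p H) (coset G p K) k) ->
  forall w p H H', Forall (fun s => exists K, Hs K /\ K s) w -> G1 p -> Hs H -> Hs H' ->
    Defs.dist G Sg x p + INR (cost w) < E ->
    exists k, (k <= (length w + 1) * Nc)%nat /\ Chn Ls P (coset G p H) (coset G (gmul p (wprod G w)) H') k.
Proof.
  intros hG1 hK hbase. induction w as [|s w IH]; intros p H H' hw hp hH hH' hd.
  - simpl in *. rewrite gmul1r. destruct (hbase p H H' hp hH hH') as [k [hk hc]]. lra.
    exists k. split; auto. lia.
  - inversion hw as [|s' w' [K [hKs hKsK]] hw']; subst.
    simpl cost in hd. rewrite plus_INR in hd. pose proof (pos_INR (cost w)). pose proof (pos_INR (word_len G Sg s)).
    destruct (hbase p H K hp hH hKs) as [k1 [hk1 hc1]]. lra.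
    destruct (hK K hKs) as [hKsub hKG].
    rewrite (coset_eq K p s hKsub hKsK) in hc1.
    destruct (IH (gmul p s) K H' hw') as [k2 [hk2 hc2]]; auto.
    destruct hG1 as [_ [g2 _]]. apply g2; auto.
    pose proof (dist_tri x p (gmul p s)) as ht. rewrite dist_mulr in ht. lra.
    exists (k1 + k2 - 1)%nat. split. simpl length. nia.
    simpl wprod. rewrite gmulA. apply Chn_cat with (coset G (gmul p s) K); auto.
Qed.


Lemma main_sec (Hs : (G -> Prop) -> Prop) :
  (exists H, Hs H) -> (exists M : R, tight_alg_network G Sg M Hs) ->
  exists tau eta : R, 0 <= tau /\ 0 <= eta /\
    tight_network G Sg tau eta (coset_family G (gen_union G Hs) Hs).
Proof.
  intros [H0 hH0] [M [hH [[T hT] hch]]].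
  set (G1 := gen_union G Hs).
  assert (hG1 : is_subgroup G G1) by apply gen_sub.
  assert (hK : forall K, Hs K -> is_subgroup G K /\ forall z, K z -> G1 z).
  { intros K hk. split. apply hH; auto. intros z hz. apply gen_incl. exists K; auto. }
  assert (hM : 0 < M) by (apply (qc_pos M H0); apply hH; auto).
  destruct (finite_Hs M Hs hH) as [HL hHL].
  destruct (INR_unbounded M) as [M' hM'].
  destruct (bound_list (fun t n => (word_len G Sg t <= n)%nat) T) as [NT hNT].
  { intros t _. exists (word_len G Sg t). auto. }
  set (T0 := (M' + NT + 1)%nat). set (tau := INR T0).
  assert (hT0 : (1 <= T0)%nat) by (unfold T0; lia).
  assert (htau : 0 < tau) by (apply lt_0_INR; lia).
  assert (hMtau : M < tau) by (assert (INR M' <= tau) by (apply le_INR; unfold T0; lia); lra).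
  destruct (bound_list (fun pr n => Hs (fst pr) -> Hs (snd pr) ->
     exists Hi : nat -> (G -> Prop), (1 <= n)%nat /\ Hi 0%nat = fst pr /\ Hi (n - 1)%nat = snd pr /\
       (forall i, (i < n)%nat -> Hs (Hi i)) /\
       (forall i, (i + 1 < n)%nat -> ~ finite_set G (inter G (Hi i) (Hi (Datatypes.S i))) /\
          path_connected G Sg M (inter G (Hi i) (Hi (Datatypes.S i))))) (list_prod HL HL)) as [Nc hNc].
  { intros [A B] _. simpl. destruct (classic (Hs A /\ Hs B)) as [[hA hB]|hn].
    - destruct (hch A B hA hB) as [k [Hi hk]]. exists k. intros _ _. exists Hi. exact hk.
    - exists 0%nat. intros; tauto. }
  destruct (bound_list (fun pr n => Hs (fst pr) -> Hs (snd pr) -> forall z,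
     nbhd G Sg tau (fst pr) z -> nbhd G Sg tau (snd pr) z -> nbhd G Sg (INR n) (inter G (fst pr) (snd pr)) z)
     (list_prod HL HL)) as [Rr hRr].
  { intros [A B] _. simpl. destruct (classic (Hs A /\ Hs B)) as [[hA hB]|hn].
    - destruct (inter_lemma A B T0) as [n hn]. apply hH; auto. apply hH; auto.
      exists n. intros _ _. exact hn.
    - exists 0%nat. intros; tauto. }
  destruct (bound_list (fun u n => G1 u -> exists w, Forall (fun s => exists K, Hs K /\ K s) w /\
     wprod G w = u /\ (cost w + length w <= n)%nat) (ballL (6 * T0))) as [W hW].
  { intros u _. destruct (classic (G1 u)) as [hu|hu].
    - destruct hu as [w [hw e]]. exists (cost w + length w)%nat. intros _. exists w. split; auto.
      unfold word_over in hw. eapply Forall_impl; [|exact hw].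
      intros s [[K [hk hks]]|[K [hk hks]]]. exists K; auto. exists K. split; auto.
      rewrite <- (ginvK s). apply hH; auto.
    - exists 0%nat. intro; contradiction. }
  set (E := (Nc * (W + 1) + 3 * T0 + W + Rr + M' + 1)%nat). set (eta := INR E).
  assert (hMe : M < eta) by (assert (INR M' <= eta) by (apply le_INR; unfold E; lia); lra).
  assert (hRe : INR Rr <= eta) by (apply le_INR; unfold E; lia).
  exists tau, eta. split; [lra|split; [apply pos_INR|]].
  split; [|split].
  -
    intros L [g [H [hg [hHs e]]]]. subst L. intros x y [a [ha ex]] [b [hb ey]]. subst x y.
    destruct (hH H hHs) as [_ hq]. destruct (hq a b ha hb) as [a0 [b0 [q [[hab hqg] [ea [eb hn]]]]]].
    exists a0, b0, (fun t => gmul g (q t)). split; [split; auto|split; [rewrite ea; auto|split; [rewrite eb; auto|]]].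
    + intros s t hs ht. rewrite dist_left. destruct (hqg s t hs ht) as [l1 l2].
      pose proof (Rabs_pos (s - t)).
      assert (/ eta <= / M) by (apply Rinv_le_contravar; lra).
      split; nra.
    + intros t ht. apply nbhd_coset. rewrite mulKV. destruct (hn t ht) as [z [hz hd]]. exists z; split; auto. lra.
  -
    intro x. destruct (hT (ginv x)) as [t [k [ht [hk e]]]].
    exists (coset G (ginv k) H0). split.
    + exists (ginv k), H0. split; auto. destruct hG1 as [_ [_ g3]]. apply g3; auto.
    + exists (ginv k). split. exists gone. split. apply hH; auto. rewrite gmul1r; auto.
      unfold Defs.dist. rewrite e, mulKr. destruct (hNT t ht) as [n [hn hwn]].
      apply lt_INR. unfold T0. lia.
  -
    intros L L' x0 [g [H [hg [hHs eL]]]] [g' [H' [hg' [hHs' eL']]]] [y [hy hLy]] [y' [hy' hLy']].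
    subst L L'. destruct hLy as [h [hh ey]]. destruct hLy' as [h' [hh' ey']].
    rewrite (coset_eq H g h (proj1 (hH H hHs)) hh). rewrite (coset_eq H' g' h' (proj1 (hH H' hHs')) hh').
    rewrite <- ey, <- ey'.
    assert (hGy : G1 y) by (subst y; destruct hG1 as [_ [g2 _]]; apply g2; auto; apply hK with H; auto).
    assert (hGy' : G1 y') by (subst y'; destruct hG1 as [_ [g2 _]]; apply g2; auto; apply hK with H'; auto).
    unfold ball in hy, hy'.
    assert (hu : In (gmul (ginv y) y') (ballL (6 * T0))).
    { apply in_ballL. apply INR_le. fold (Defs.dist G Sg y y'). pose proof (dist_tri y x0 y').
      rewrite (dist_sym y x0) in H1. rewrite mult_INR. fold tau. simpl (INR 6). lra. }
    destruct (hW _ hu) as [n [hnW hwd]]. destruct hwd as [w [hw [ew hcw]]].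
    { destruct hG1 as [_ [g2 g3]]. apply g2; auto. }
    assert (base : forall p A B, G1 p -> Hs A -> Hs B -> Defs.dist G Sg x0 p < eta ->
       exists k, (k <= Nc)%nat /\ Chn (coset_family G G1 Hs) (PIc tau eta x0) (coset G p A) (coset G p B) k).
    { intros p A B hp hA hB hdp.
      assert (hin : In (A, B) (list_prod HL HL)) by (apply in_prod; auto).
      destruct (hNc _ hin) as [k [hk hc]]. destruct (hc hA hB) as [Hi [c1 [c2 [c3 [c4 c5]]]]].
      simpl in c2, c3.
      exists k. split; auto. exists (fun i => coset G p (Hi i)). split; auto. split. simpl; rewrite c2; auto.
      split. simpl; rewrite c3; auto. split.
      - intros i hi. exists p, (Hi i). auto.
      - intros i hi. destruct (c5 i hi) as [hinf hpc].
        assert (hA' := c4 i ltac:(lia)). assert (hB' := c4 (Datatypes.S i) ltac:(lia)).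
        apply (PI_coset tau eta M (INR Rr)); auto; try (apply hH; auto); try lra.
        intros z hz1 hz2.
        assert (hin2 : In (Hi i, Hi (Datatypes.S i)) (list_prod HL HL)) by (apply in_prod; auto).
        destruct (hRr _ hin2) as [m [hm hP]]. destruct (hP hA' hB' z hz1 hz2) as [c [hc0 hdc]].
        exists c. split; auto. apply le_INR in hm. simpl in hdc. lra. }
    destruct (walk (coset_family G G1 Hs) Hs G1 (PIc tau eta x0) Nc x0 eta hG1 hK base w y H H' hw hGy hHs hHs')
      as [k [hk hc]].
    { assert (INR (cost w) <= INR W) by (apply le_INR; lia).
      assert (INR (3 * T0) + INR W + 1 <= eta) by (rewrite <- plus_INR, <- S_INR; apply le_INR; unfold E; lia).
      rewrite mult_INR in H2. simpl (INR 3) in H2. fold tau in H2. lra. }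
    rewrite ew, mulVK in hc. destruct hc as [Li [c1 [c2 [c3 [c4 c5]]]]].
    exists k, Li. split; auto. split.
    { apply le_INR. unfold E. assert (length w <= W)%nat by lia. nia. }
    split; [exact c2|split; [exact c3|split; [exact c4|]]]. intros i hi. exact (c5 i hi).
Qed.

End Grp.

Theorem proposition4p3 (G : Group) (S : list G) (Hs : (G -> Prop) -> Prop) :
  generates G S ->
  (exists H, Hs H) ->
  (exists M : R, tight_alg_network G S M Hs) ->
  exists tau eta : R, 0 <= tau /\ 0 <= eta /\
    tight_network G S tau eta (coset_family G (gen_union G Hs) Hs).
Proof. intros hg. apply main_sec; auto. Qed.
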